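(* Let $\Gamma$ be a geometrically finite Fuchsian group such that $\infty\notin\widehat{\mathbb{R}}_{\mathrm{st}}$, so that the stabilizer $\Gamma_\infty$ of $\infty$ in $\Gamma$ is either trivial or generated by $t_\lambda=\begin{bmatrix}1&\lambda\\0&1\end{bmatrix}$ for some $\lambda>0$. Let $\mathrm{I},\mathrm{J}$ be isometric spheres of $\Gamma$ which are concentric (i.e. have the same Euclidean center). Then $\mathrm{I}=\mathrm{J}$.
   Context: A Fuchsian group is a discrete subgroup of $\mathrm{PSL}_2(\mathbb{R})$, acting on the upper half-plane $\mathbb{H}$ and on $\widehat{\mathbb{R}}=\mathbb{R}\cup\{\infty\}$ by linear fractional transformations. $\Lambda(\Gamma)$ denotes the limit set, and $\widehat{\mathbb{R}}_{\mathrm{st}}$ is $\Lambda(\Gamma)$ with all parabolic fixed points of $\Gamma$ removed. For $g=\begin{bmatrix}a&b\\c&d\end{bmatrix}\in\Gamma\setminus\Gamma_\infty$ (so $c\neq 0$) the isometric sphere of $g$ is $\mathrm{I}(g)=\{z\in\mathbb{H}: |g'(z)|=1\}=\{z\in\mathbb{H}: |z+\tfrac{d}{c}|=\tfrac{1}{|c|}\}$, a Euclidean semicircle with center $-d/c$ and radius $1/|c|$. The isometric spheres of $\Gamma$ are the sets $\mathrm{I}(g)$, $g\in\Gamma\setminus\Gamma_\infty$. *)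

(* Defs.v *)
From Stdlib Require Import Reals List.
Open Scope R_scope.

Record mat := Mat { ma : R; mb : R; mc : R; md : R }.

Definition mid : mat := Mat 1 0 0 1.
Definition mneg (g : mat) : mat := Mat (- ma g) (- mb g) (- mc g) (- md g).
Definition mmul (g h : mat) : mat :=
  Mat (ma g * ma h + mb g * mc h) (ma g * mb h + mb g * md h)
      (mc g * ma h + md g * mc h) (mc g * mb h + md g * md h).
Definition mdet (g : mat) : R := ma g * md g - mb g * mc g.
(* inverse of a determinant-one matrix *)
Definition minv (g : mat) : mat := Mat (md g) (- mb g) (- mc g) (ma g).

(* A subgroup of PSL_2(R) is represented by its full preimage in SL_2(R):
   a set of determinant-one matrices, closed under products, inverses and
   negation, containing the identity. *)
Definition SL2_preimage_subgroup (G : mat -> Prop) : Prop :=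
  G mid /\
  (forall g, G g -> mdet g = 1) /\
  (forall g h, G g -> G h -> G (mmul g h)) /\
  (forall g, G g -> G (minv g)) /\
  (forall g, G g -> G (mneg g)).

Definition discrete (G : mat -> Prop) : Prop :=
  exists eps, 0 < eps /\
    forall g, G g ->
      Rabs (ma g - 1) < eps -> Rabs (mb g) < eps ->
      Rabs (mc g) < eps -> Rabs (md g - 1) < eps -> g = mid.

Definition Fuchsian (G : mat -> Prop) : Prop :=
  SL2_preimage_subgroup G /\ discrete G.

(* Points of the upper half-plane: pairs (x, y) standing for x + i y, y > 0. *)
Definition inH (z : R * R) : Prop := 0 < snd z.

(* Linear fractional action on the upper half-plane (for det g = 1):
   (a z + b)/(c z + d) with z = x + i y. *)
Definition act (g : mat) (z : R * R) : R * R :=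
  let x := fst z in let y := snd z in
  let N := (mc g * x + md g) ^ 2 + (mc g * y) ^ 2 in
  (((ma g * x + mb g) * (mc g * x + md g) + ma g * mc g * y ^ 2) / N,
   mdet g * y / N).

(* Points of the extended real line R-hat = R u {oo}. *)
Inductive bpt := Fin (x : R) | Inf.

(* g fixes the boundary point p (g . p = p); for Fin x this is the
   cleared-denominator form of (a x + b)/(c x + d) = x. *)
Definition fixes (g : mat) (p : bpt) : Prop :=
  match p with
  | Inf => mc g = 0
  | Fin x => mc g * x ^ 2 + (md g - ma g) * x - mb g = 0
  end.

Definition conv_to (u : nat -> R * R) (p : bpt) : Prop :=
  match p with
  | Fin x => forall eps, 0 < eps -> exists N, forall n, (N <= n)%nat ->
               Rabs (fst (u n) - x) < eps /\ Rabs (snd (u n)) < eps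
  | Inf => forall M, exists N, forall n, (N <= n)%nat ->
               M < (fst (u n)) ^ 2 + (snd (u n)) ^ 2
  end.

Definition ipt : R * R := (0, 1).

(* limit set: accumulation points in R-hat of the orbit of i *)
Definition limit_set (G : mat -> Prop) (p : bpt) : Prop :=
  exists gs : nat -> mat, (forall n, G (gs n)) /\
    conv_to (fun n => act (gs n) ipt) p.

Definition parabolic (g : mat) : Prop :=
  g <> mid /\ g <> mneg mid /\ Rabs (ma g + md g) = 2.

Definition parabolic_fixed_point (G : mat -> Prop) (p : bpt) : Prop :=
  exists g, G g /\ parabolic g /\ fixes g p.

Definition Rst (G : mat -> Prop) (p : bpt) : Prop :=
  limit_set G p /\ ~ parabolic_fixed_point G p.

Definition cosh_hdist (z w : R * R) : R :=
  1 + ((fst z - fst w) ^ 2 + (snd z - snd w) ^ 2) / (2 * snd z * snd w).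

Definition dirichlet (G : mat -> Prop) (p z : R * R) : Prop :=
  inH z /\ forall g, G g -> cosh_hdist z p <= cosh_hdist z (act g p).

(* Geometric finiteness: some Dirichlet region (centred at a point with
   trivial stabilizer in PSL_2) has finitely many sides, i.e. is cut out by
   finitely many of its defining half-planes. *)
Definition geometrically_finite (G : mat -> Prop) : Prop :=
  exists p, inH p /\
    (forall g, G g -> act g p = p -> g = mid \/ g = mneg mid) /\
    exists F : list mat, (forall g, In g F -> G g) /\
      forall z, dirichlet G p z <->
        (inH z /\ forall g, In g F -> cosh_hdist z p <= cosh_hdist z (act g p)).

(* Isometric sphere of g (with c <> 0): semicircle of centre -d/c, radius 1/|c| *)
Definition isom_center (g : mat) : R := - md g / mc g.
Definition isom_sphere (g : mat) (z : R * R) : Prop :=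
  inH z /\ (fst z - isom_center g) ^ 2 + snd z ^ 2 = (1 / Rabs (mc g)) ^ 2.

(* Main.v *)
Require Import Defs.
From Stdlib Require Import Reals List Lra Lia Psatz.
Open Scope R_scope.

Fixpoint epow (e : mat) (n : nat) : mat :=
  match n with O => mid | S n => mmul e (epow e n) end.

Fixpoint conjit (e q : mat) (n : nat) : mat :=
  match n with O => q | S n => mmul (minv e) (mmul (conjit e q n) e) end.

Lemma epow_form a b d n : exists B, epow (Mat a b 0 d) n = Mat (a ^ n) B 0 (d ^ n).
Proof.
  induction n as [|n [B HB]]; simpl.
  - exists 0. reflexivity.
  - rewrite HB. exists (a * B + b * d ^ n). unfold mmul; simpl. f_equal; ring.
Qed.

Lemma conjit_form a b d t n : a * d = 1 ->
  conjit (Mat a b 0 d) (Mat 1 t 0 1) n = Mat 1 (t * (d ^ 2) ^ n) 0 1.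
Proof.
  intro Had. induction n as [|n IH]; simpl.
  - f_equal; ring.
  - rewrite IH. unfold mmul, minv; simpl. f_equal; nra.
Qed.

Lemma core (G : mat -> Prop) (e : mat) :
  Fuchsian G -> G e -> mc e = 0 -> 1 < Rabs (ma e) -> Rst G Inf.
Proof.
  intros [[Hid [Hdet [Hmul [Hinv Hneg]]]] [eps [Heps Hdisc]]] He Hc Ha.
  destruct e as [a b c d]; simpl in *; subst c.
  assert (Had : a * d = 1).
  { pose proof (Hdet _ He) as H; unfold mdet in H; simpl in H; lra. }
  assert (HG : forall n, G (epow (Mat a b 0 d) n)).
  { induction n; simpl; auto. }
  split.
  - exists (epow (Mat a b 0 d)). split; [exact HG|].
    intro M. destruct (Pow_x_infinity a) with (b := Rabs M + 1) as [N HN]; [lra|].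
    exists N. intros n Hn. specialize (HN n Hn).
    destruct (epow_form a b d n) as [B HB]. rewrite HB.
    assert (HAD : a ^ n * d ^ n = 1).
    { rewrite <- Rpow_mult_distr, Had. apply pow1. }
    assert (HD : d ^ n <> 0) by (intro H; rewrite H in HAD; lra).
    assert (Hs : snd (act (Mat (a ^ n) B 0 (d ^ n)) ipt) = (a ^ n) ^ 2).
    { unfold act, ipt, mdet; simpl.
      set (A := a ^ n) in *; set (D := d ^ n) in *.
      assert (HA : A = / D) by (apply (Rmult_eq_reg_r D); [rewrite Rinv_l; lra|exact HD]).
      rewrite HA. field. exact HD. }


    rewrite Hs.
    assert (Habs : Rabs M < (a ^ n) ^ 2).
    { assert (0 <= Rabs (a ^ n)) by apply Rabs_pos.
      rewrite <- pow2_abs. nra. }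
    assert (H1 : 1 <= (a ^ n) ^ 2).
    { assert (0 <= Rabs (a ^ n)) by apply Rabs_pos. pose proof (Rabs_pos M).
      rewrite <- pow2_abs. nra. }
    pose proof (Rle_abs M).
    assert (0 <= fst (act (Mat (a ^ n) B 0 (d ^ n)) ipt) ^ 2) by (apply pow2_ge_0).
    set (X := (a ^ n) ^ 2) in *. set (Y := fst _ ^ 2) in *. nra.
  - intros [p [Hp [[Hp1 [Hp2 Htr]] Hfix]]].
    destruct p as [pa pb pc pd]; simpl in *. subst pc.
    assert (Hpd : pa * pd = 1).
    { pose proof (Hdet _ Hp) as H; unfold mdet in H; simpl in H; lra. }
    assert (Ht : exists t, t <> 0 /\ G (Mat 1 t 0 1)).
    { destruct (Rcase_abs (pa + pd)) as [Hl|Hr].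
      - rewrite Rabs_left in Htr; [|lra].
        assert (pa = -1) by nra. assert (pd = -1) by nra. subst.
        exists (- pb). split.
        + intro H0. apply Hp2. unfold mneg, mid; simpl. f_equal; lra.
        + pose proof (Hneg _ Hp) as H; unfold mneg in H; simpl in H.
          replace (Mat 1 (- pb) 0 1) with (Mat (- -1) (- pb) (- 0) (- -1)) by (f_equal; lra).
          exact H.
      - rewrite Rabs_right in Htr; [|lra].
        assert (pa = 1) by nra. assert (pd = 1) by nra. subst.
        exists pb. split; [|exact Hp].
        intro H0. apply Hp1. subst. reflexivity. }
    destruct Ht as [t [Ht0 HtG]].
    assert (HC : forall n, G (conjit (Mat a b 0 d) (Mat 1 t 0 1) n)).
    { induction n; simpl; auto. }
    assert (Hd2 : Rabs (d ^ 2) < 1).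
    { assert (Hd : Rabs a * Rabs d = 1) by (rewrite <- Rabs_mult, Had; apply Rabs_R1).
      rewrite <- RPow_abs. pose proof (Rabs_pos d). simpl. nra. }
    assert (Htp : 0 < Rabs t) by (apply Rabs_pos_lt; exact Ht0).
    destruct (pow_lt_1_zero _ Hd2 (eps / Rabs t)) as [N HN].
    { apply Rdiv_lt_0_compat; lra. }
    specialize (HN N (le_n N)).
    specialize (Hdisc _ (HC N)).
    rewrite conjit_form in Hdisc by exact Had. simpl in Hdisc.
    assert (Hsmall : Rabs (t * (d ^ 2) ^ N) < eps).
    { rewrite Rabs_mult.
      apply (Rmult_lt_compat_l (Rabs t)) in HN; [|exact Htp].
      replace (Rabs t * (eps / Rabs t)) with eps in HN by (field; lra). exact HN. }
    replace (1 - 1) with 0 in Hdisc by ring. rewrite Rabs_R0 in Hdisc.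
    specialize (Hdisc Heps Hsmall Heps Heps).
    unfold mid in Hdisc. injection Hdisc as Hz.
    assert (Hd0 : d <> 0) by (intro H; subst; lra).
    apply Rmult_integral in Hz. destruct Hz as [Hz|Hz]; [lra|].
    apply (pow_nonzero (d ^ 2) N); [apply pow_nonzero; exact Hd0|exact Hz].
Qed.

Theorem lemma2p1 (G : mat -> Prop) :
  Fuchsian G -> geometrically_finite G -> ~ Rst G Inf ->
  forall g h : mat, G g -> G h -> ~ fixes g Inf -> ~ fixes h Inf ->
  isom_center g = isom_center h ->
  isom_sphere g = isom_sphere h.
Proof.
  intros HF _ Hst g h Hg Hh Hgc Hhc Hcen.
  assert (HF' := HF).
  destruct HF' as [[Hid [Hdet [Hmul [Hinv Hneg]]]] _].
  simpl in Hgc, Hhc.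
  set (f := mmul h (minv g)).
  assert (Hf : G f) by (apply Hmul; auto).
  assert (Hcross : md g * mc h = md h * mc g).
  { unfold isom_center in Hcen. field_simplify in Hcen; auto.
    apply (Rmult_eq_reg_r (/ (mc g * mc h))).
    - field_simplify; auto. nra.
    - apply Rinv_neq_0_compat. intro H. apply Rmult_integral in H. tauto. }
  assert (Hfc : mc f = 0).
  { unfold f, mmul, minv; simpl. nra. }
  pose proof (Hdet _ Hg) as Hdg. pose proof (Hdet _ Hf) as Hdf.
  unfold mdet in Hdg, Hdf. rewrite Hfc in Hdf.
  assert (Hch : mc h = md f * mc g).
  { unfold f, mmul, minv; simpl.
    transitivity (mc h * (ma g * md g - mb g * mc g) + ma g * (md h * mc g - md g * mc h)).
    - rewrite Hdg, Hcross. ring.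
    - ring. }
  assert (Habs : Rabs (md f) = 1).
  { destruct (Rtotal_order (Rabs (md f)) 1) as [Hl|[He|Hgt]]; auto; exfalso; apply Hst.
    - apply (core G f HF Hf Hfc).
      assert (Rabs (ma f) * Rabs (md f) = 1) by (rewrite <- Rabs_mult; replace (ma f * md f) with 1 by lra; apply Rabs_R1).
      pose proof (Rabs_pos (md f)). nra.
    - apply (core G (minv f) HF (Hinv _ Hf)); unfold minv; simpl; [lra|].
      exact Hgt. }
  assert (Hr : Rabs (mc h) = Rabs (mc g)).
  { rewrite Hch, Rabs_mult, Habs. ring. }
  unfold isom_sphere. rewrite Hcen, Hr. reflexivity.
Qed.
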